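(* Let $\mathbf A=(A,\wedge,\vee,\cdot,\backslash,/,1)$ be an $r\ell u$-groupoid and let $(A^\star,\le^\star,\cdot^\star,1^\star)$ be constructed from it as described in the context. Then: (1) $(A^\star,\le^\star,\cdot^\star,1^\star)$ is a lattice-ordered unital groupoid, i.e. $\le^\star$ is a lattice order, $1^\star$ is a two-sided unit for $\cdot^\star$, and $x\le^\star y$ implies $x\cdot^\star z\le^\star y\cdot^\star z$ and $z\cdot^\star x\le^\star z\cdot^\star y$; (2) for all $x,y,z\in A^\star$: $x\cdot^\star y\le^\star z$ iff ${\sim}z\cdot^\star x\le^\star{\sim}y$ iff $y\cdot^\star{\sim}z\le^\star{\sim}x$.
   Context: An $r\ell u$-groupoid is an algebra $(A,\wedge,\vee,\cdot,\backslash,/,1)$ with $(A,\wedge,\vee)$ a lattice (order $\le$), $(A,\cdot,1)$ a unital groupoid (not necessarily associative), and $x\cdot y\le z\iff y\le x\backslash z\iff x\le z/y$. Construction: $A^\star=A\cup A^\sim\cup\{\top,\bot\}$, where $A^\sim=\{x^\sim\mid x\in A\}$ is a disjoint bijective copy of $A$ and $\top,\bot$ are two new elements. Multiplication: for $x,y\in A$ and $z\in A^\star$: $x\cdot^\star y=x\cdot y$; $x\cdot^\star y^\sim=(y/x)^\sim$; $x^\sim\cdot^\star y=(y\backslash x)^\sim$; $x^\sim\cdot^\star y^\sim=\top$; $z\cdot^\star\top=\top\cdot^\star z=\top$ if $z\neq\bot$ and $=\bot$ if $z=\bot$; $z\cdot^\star\bot=\bot\cdot^\star z=\bot$. Order $\le^\star$: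 extends $\le$ on $A$; $\bot<^\star x<^\star y^\sim<^\star\top$ for all $x,y\in A$; $x^\sim\le^\star y^\sim$ iff $y\le x$. $1^\star=1$. The map ${\sim}$ on $A^\star$: ${\sim}x=x^\sim$ for $x\in A$; ${\sim}(y^\sim)=y$ for $y\in A$; ${\sim}\top=\bot$; ${\sim}\bot=\top$. *)

(* Defs.v *)
Set Implicit Arguments.

Section RLU.
Variable A : Type.
Variables (meet join mul ldiv rdiv : A -> A -> A) (one : A).

Definition lat_le (x y : A) : Prop := meet x y = x.

Record is_rlu_groupoid : Prop := {
  meet_assoc : forall x y z, meet x (meet y z) = meet (meet x y) z;
  join_assoc : forall x y z, join x (join y z) = join (join x y) z;
  meet_comm  : forall x y, meet x y = meet y x;
  join_comm  : forall x y, join x y = join y x;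
  meet_absorb : forall x y, meet x (join x y) = x;
  join_absorb : forall x y, join x (meet x y) = x;
  mul_one_l : forall x, mul one x = x;
  mul_one_r : forall x, mul x one = x;
  resid_l : forall x y z, lat_le (mul x y) z <-> lat_le y (ldiv x z);
  resid_r : forall x y z, lat_le (mul x y) z <-> lat_le x (rdiv z y)
}.

(* The construction A* = A ∪ A~ ∪ {Top, Bot} *)
Inductive star : Type :=
| Inj : A -> star
| Tld : A -> star
| Top : star
| Bot : star.

Definition star_one : star := Inj one.

Definition star_mul (u v : star) : star :=
  match u, v with
  | Bot, _ => Bot
  | _, Bot => Bot
  | Top, _ => Top
  | _, Top => Top
  | Inj x, Inj y => Inj (mul x y)
  | Inj x, Tld y => Tld (rdiv y x)
  | Tld x, Inj y => Tld (ldiv y x)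
  | Tld _, Tld _ => Top
  end.

Definition star_le (u v : star) : Prop :=
  match u, v with
  | Bot, _ => True
  | _, Top => True
  | Inj x, Inj y => lat_le x y
  | Inj _, Tld _ => True
  | Tld x, Tld y => lat_le y x
  | _, _ => False
  end.

Definition star_neg (u : star) : star :=
  match u with
  | Inj x => Tld x
  | Tld x => Inj x
  | Top => Bot
  | Bot => Top
  end.

End RLU.

Definition is_lattice_order (T : Type) (le : T -> T -> Prop) : Prop :=
  (forall x, le x x) /\
  (forall x y, le x y -> le y x -> x = y) /\
  (forall x y z, le x y -> le y z -> le x z) /\
  (forall x y, exists j, le x j /\ le y j /\ forall z, le x z -> le y z -> le j z) /\
  (forall x y, exists m, le m x /\ le m y /\ forall z, le z x -> le z y -> le z m).

(* Main.v *)
Require Import Defs.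
From Stdlib Require Import Setoid.

Theorem mainTheorem13 (A : Type) (meet join mul ldiv rdiv : A -> A -> A) (one : A)
  (HA : is_rlu_groupoid meet join mul ldiv rdiv one) :
  let le := star_le meet in
  let m := star_mul mul ldiv rdiv in
  let e := star_one one in
  (* (1) lattice-ordered unital groupoid *)
  (is_lattice_order le /\
   (forall x, m e x = x) /\ (forall x, m x e = x) /\
   (forall x y z, le x y -> le (m x z) (m y z) /\ le (m z x) (m z y))) /\
  (* (2) *)
  (forall x y z,
     (le (m x y) z <-> le (m (star_neg z) x) (star_neg y)) /\
     (le (m (star_neg z) x) (star_neg y) <-> le (m y (star_neg z)) (star_neg x))).
Proof.
  destruct HA as [mA jA mC jC mJ jM m1l m1r rl rr].
  assert (refl : forall x, lat_le meet x x).
  { intro x. unfold lat_le. rewrite <- (jM x x) at 2. rewrite mJ. reflexivity. }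
  assert (anti : forall x y, lat_le meet x y -> lat_le meet y x -> x = y).
  { unfold lat_le; intros x y H1 H2. rewrite <- H1, <- H2 at 1. rewrite mC. congruence. }
  assert (trans : forall x y z, lat_le meet x y -> lat_le meet y z -> lat_le meet x z).
  { unfold lat_le; intros x y z H1 H2. rewrite <- H1, <- mA, H2. reflexivity. }
  assert (meetjoin : forall x y, lat_le meet x y -> join x y = y).
  { unfold lat_le; intros x y H. rewrite jC, <- H, mC. apply jM. }
  assert (jub1 : forall x y, lat_le meet x (join x y)).
  { intros; apply mJ. }
  assert (jub2 : forall x y, lat_le meet y (join x y)).
  { intros; rewrite jC; apply mJ. }
  assert (jlub : forall x y z, lat_le meet x z -> lat_le meet y z -> lat_le meet (join x y) z).
  { intros x y z H1 H2. apply meetjoin in H1. apply meetjoin in H2. unfold lat_le.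
    assert (E : join (join x y) z = z) by (rewrite <- jA, H2, H1; reflexivity).
    rewrite <- E at 1. apply mJ. }
  assert (mlb1 : forall x y, lat_le meet (meet x y) x).
  { intros x y. unfold lat_le. rewrite (mC x y), <- mA. f_equal. apply refl. }
  assert (mlb2 : forall x y, lat_le meet (meet x y) y).
  { intros x y. unfold lat_le. rewrite <- mA. f_equal. apply refl. }
  assert (mglb : forall x y z, lat_le meet z x -> lat_le meet z y -> lat_le meet z (meet x y)).
  { unfold lat_le; intros x y z H1 H2. rewrite mA, H1, H2. reflexivity. }
  assert (mulL : forall a b c, lat_le meet a b -> lat_le meet (mul a c) (mul b c)).
  { intros a b c H. apply rr. apply (trans _ _ _ H). apply rr. apply refl. }
  assert (mulR : forall a b c, lat_le meet a b -> lat_le meet (mul c a) (mul c b)).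
  { intros a b c H. apply rl. apply (trans _ _ _ H). apply rl. apply refl. }
  assert (ldiv2 : forall a b c, lat_le meet a b -> lat_le meet (ldiv c a) (ldiv c b)).
  { intros a b c H. apply rl. eapply trans; [|exact H]. apply rl. apply refl. }
  assert (ldiv1 : forall a b c, lat_le meet a b -> lat_le meet (ldiv b c) (ldiv a c)).
  { intros a b c H. apply rl. eapply trans; [apply mulL; exact H|]. apply rl. apply refl. }
  assert (rdiv1 : forall a b c, lat_le meet a b -> lat_le meet (rdiv a c) (rdiv b c)).
  { intros a b c H. apply rr. eapply trans; [|exact H]. apply rr. apply refl. }
  assert (rdiv2 : forall a b c, lat_le meet a b -> lat_le meet (rdiv c b) (rdiv c a)).
  { intros a b c H. apply rr. eapply trans; [apply mulR; exact H|]. apply rr. apply refl. }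
  assert (rd1 : forall a, rdiv a one = a).
  { intro a. apply anti.
    - rewrite <- (m1r (rdiv a one)). apply rr. apply refl.
    - apply rr. rewrite m1r. apply refl. }
  assert (ld1 : forall a, ldiv one a = a).
  { intro a. apply anti.
    - rewrite <- (m1l (ldiv one a)). apply rl. apply refl.
    - apply rl. rewrite m1l. apply refl. }
  intros le m e. subst le m e.
  split; [split; [|split; [|split]]|].
  - split; [|split; [|split; [|split]]].
    + intros []; simpl; auto.
    + intros [a| a| |] [b| b| |]; simpl; try tauto; intros H1 H2; f_equal; auto.
    + intros [a| a| |] [b| b| |] [c| c| |]; simpl; try tauto; eauto.
    + intros [a| a| |] [b| b| |];
        [exists (Inj (join a b)) | exists (Tld b) | exists (Top A) | exists (Inj a)
        |exists (Tld a) | exists (Tld (meet a b)) | exists (Top A) | exists (Tld a)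
        |exists (Top A)|exists (Top A)|exists (Top A)|exists (Top A)
        |exists (Inj b)|exists (Tld b)|exists (Top A)|exists (Bot A)];
        simpl; repeat split; try tauto; auto; try (intros [c| c| |]; simpl; auto; tauto).
    + intros [a| a| |] [b| b| |];
        [exists (Inj (meet a b)) | exists (Inj a) | exists (Inj a) | exists (Bot A)
        |exists (Inj b) | exists (Tld (join a b)) | exists (Tld a) | exists (Bot A)
        |exists (Inj b)|exists (Tld b)|exists (Top A)|exists (Bot A)
        |exists (Bot A)|exists (Bot A)|exists (Bot A)|exists (Bot A)];
        simpl; repeat split; try tauto; auto; try (intros [c| c| |]; simpl; auto; tauto).
  - intros []; unfold star_one; simpl; rewrite ?m1l, ?rd1; auto.
  - intros []; unfold star_one; simpl; rewrite ?m1r, ?ld1; auto.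
  - intros [a| a| |] [b| b| |] [c| c| |]; simpl; try tauto; auto.
  - intros [a| a| |] [b| b| |] [c| c| |]; simpl; try tauto;
      unfold lat_le in *; rewrite <- ?rl, <- ?rr; rewrite <- ?rl; try tauto;
      split; (rewrite <- rl; rewrite rr) || tauto.
Qed.
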